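(* Let $E$ be a Banach space, $p$ a prime, and $\sigma:E\to E$ a linear isometry with $\sigma^p=\mathrm{id}$, generating a $\mathbb{Z}_p$-action; let $F_\sigma=\{U\in E:\sigma U=U\}$. Let $A\subset E$ be a compact set such that $\mathbb{Z}_p(A):=\bigcup_{i=0}^{p-1}\sigma^i(A)\subset E\setminus F_\sigma$ and $\bigcap_{i=0}^{p-1}\sigma^i(A)=\emptyset$. Then $\gamma(\mathbb{Z}_p(A))\le p-1$.
   Context: For a compact $\sigma$-invariant set $A\subset E\setminus F_\sigma$, the index $\gamma(A)$ is the smallest $m\in\mathbb{N}$ for which there exists a continuous map $h:A\to\mathbb{C}^m\setminus\{0\}$ with $h(\sigma U)=e^{2\pi i/p}h(U)$ for all $U\in A$; $\gamma(A)=\infty$ if no such map exists. *)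

(* Defs.v *)
From HB Require Import structures.
From mathcomp Require Import all_boot all_order all_algebra.
From mathcomp Require Import all_classical all_reals all_analysis.
Set Implicit Arguments. Unset Strict Implicit. Unset Printing Implicit Defensive.
Import Order.TTheory GRing.Theory Num.Theory.
Import numFieldNormedType.Exports.
Local Open Scope classical_set_scope.
Local Open Scope ring_scope.

Section Defs.
Variables (R : realType) (E : normedModType R).

(* C^m is represented as R^m x R^m (real part, imaginary part). *)
Definition cvec (m : nat) := ('rV[R]_m * 'rV[R]_m)%type.

(* multiplication of every coordinate of z in C^m by e^{i t} *)
Definition crot (m : nat) (t : R) (z : cvec m) : cvec m :=
  (cos t *: z.1 - sin t *: z.2, sin t *: z.1 + cos t *: z.2).

Definition Fix (sigma : E -> E) : set E := [set U | sigma U = U].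

Definition Zp_orbit (sigma : E -> E) (p : nat) (A : set E) : set E :=
  \bigcup_(i in `I_p) (iter i sigma @` A).

Definition index_map (sigma : E -> E) (p : nat) (A : set E) (m : nat)
    (h : E -> cvec m) : Prop :=
  [/\ {within A, continuous h},
      (forall U, A U -> h U != (0, 0)) &
      (forall U, A U -> h (sigma U) = crot (2 * pi / p%:R) (h U))].

Definition has_index (sigma : E -> E) (p : nat) (A : set E) (m : nat) : Prop :=
  exists h : E -> cvec m, index_map sigma p A h.

Lemma has_index_exb (sigma : E -> E) (p : nat) (A : set E) :
  (exists m, has_index sigma p A m) ->
  exists m, `[< has_index sigma p A m >].
Proof. by move=> [m Hm]; exists m; apply/asboolP. Qed.

(* gamma(A): Some (least m) if such a map exists, None (= infinity) otherwise *)
Definition gamma (sigma : E -> E) (p : nat) (A : set E) : option nat :=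
  match pselect (exists m, has_index sigma p A m) with
  | left H => Some (ex_minn (has_index_exb H))
  | right _ => None
  end.

End Defs.

(* Main.v *)
Require Import Defs.
From HB Require Import structures.
From mathcomp Require Import all_boot all_order all_algebra.
From mathcomp Require Import all_classical all_reals all_analysis.
From mathcomp Require Import complex lra.
Import Order.TTheory GRing.Theory Num.Theory.
Import numFieldNormedType.Exports.
Local Open Scope classical_set_scope.
Local Open Scope complex_scope.
Local Open Scope ring_scope.
Notation cRe := complex.Re.
Notation cIm := complex.Im.
Section Dist.
Context (R : realType) (E : normedModType R) (A : set E) (a0 : E) (Aa0 : A a0).

Definition dA (U : E) : R := fine (edist_inf A U).

Lemma edist_fin_norm (x y : E) : edist (x, y) \is a fin_num.
Proof.
apply/edist_finP; exists (`|x - y| + 1); first by rewrite ltr_wpDl.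
by rewrite /= -ball_normE /ball_ /= ltrDl.
Qed.

Lemma edist_inf_fin U : edist_inf A U \is a fin_num.
Proof.
rewrite ge0_fin_numE ?edist_inf_ge0 //.
have h1 : (edist_inf A U <= edist (U, a0))%E by apply: ereal_inf_lbound; exists a0.
apply: le_lt_trans h1 _; rewrite ltey; apply/negP; move/eqP => h2.
have := edist_fin_norm U a0; by rewrite h2.
Qed.

Lemma dA_continuous : continuous dA.
Proof.
move=> z; apply: fine_cvg; rewrite fineK ?edist_inf_fin //.
exact: edist_inf_continuous.
Qed.

Lemma dA0 U : A U -> dA U = 0.
Proof. by move=> AU; rewrite /dA edist_inf0. Qed.

Lemma dA_eq0 U : closed A -> dA U = 0 -> A U.
Proof.
move=> cA d0; have e0 : edist_inf A U = 0%E.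
  by rewrite -[edist_inf A U]fineK ?edist_inf_fin // -/(dA U) d0.
rewrite (closure_id A).1 //.
move=> B /nbhs_ballP [e e0' sB].
have [x [a Aa <-]] := lb_ereal_inf_adherent e0' (edist_inf_fin U).
rewrite -/(edist_inf A U) e0 add0e => /edist_lt_ball /= ba.
by exists a; split => //; apply: sB.
Qed.
End Dist.
Section CC.
Context (R : realType) (T : topologicalType).

Lemma ReM (x y : R[i]) : cRe (x * y) = cRe x * cRe y - cIm x * cIm y.
Proof. by case: x => a b; case: y => c d; rewrite /GRing.mul /GRing.add /=. Qed.
Lemma ImM (x y : R[i]) : cIm (x * y) = cRe x * cIm y + cIm x * cRe y.
Proof. by case: x => a b; case: y => c d; rewrite /GRing.mul /GRing.add /=. Qed.
Lemma ReD (x y : R[i]) : cRe (x + y) = cRe x + cRe y.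
Proof. by case: x => a b; case: y => c d; rewrite /GRing.mul /GRing.add /=. Qed.
Lemma ImD (x y : R[i]) : cIm (x + y) = cIm x + cIm y.
Proof. by case: x => a b; case: y => c d; rewrite /GRing.mul /GRing.add /=. Qed.

Definition ccont (u : T -> R[i]) :=
  continuous (fun x => cRe (u x)) /\ continuous (fun x => cIm (u x)).

Lemma ccont_cst c : ccont (fun _ => c).
Proof. by split => x; apply: cvg_cst. Qed.

Lemma ccont_real (f : T -> R) : continuous f -> ccont (fun x => (f x)%:C).
Proof. by move=> fc; split => //= x; apply: cvg_cst. Qed.

Lemma ccont_add u v : ccont u -> ccont v -> ccont (fun x => u x + v x).
Proof.
move=> [u1 u2] [v1 v2]; split.
  have -> : (fun y => cRe (u y + v y)) = (fun y => cRe (u y)) + (fun y => cRe (v y)).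
    by apply/funext => y; rewrite ReD.
  by move=> x; exact: (continuousD (u1 x) (v1 x)).
have -> : (fun y => cIm (u y + v y)) = (fun y => cIm (u y)) + (fun y => cIm (v y)).
  by apply/funext => y; rewrite ImD.
by move=> x; exact: (continuousD (u2 x) (v2 x)).
Qed.

Lemma ccont_mul u v : ccont u -> ccont v -> ccont (fun x => u x * v x).
Proof.
move=> [u1 u2] [v1 v2]; split.
  have -> : (fun y => cRe (u y * v y)) = ((fun y => cRe (u y)) \* (fun y => cRe (v y)))
     - ((fun y => cIm (u y)) \* (fun y => cIm (v y))).
    by apply/funext => y; rewrite ReM.
  by move=> x; exact: (continuousB (continuousM (u1 x) (v1 x)) (continuousM (u2 x) (v2 x))).
have -> : (fun y => cIm (u y * v y)) = ((fun y => cRe (u y)) \* (fun y => cIm (v y)))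
     + ((fun y => cIm (u y)) \* (fun y => cRe (v y))).
  by apply/funext => y; rewrite ImM.
by move=> x; exact: (continuousD (continuousM (u1 x) (v2 x)) (continuousM (u2 x) (v1 x))).
Qed.

Lemma ccont_exp u n : ccont u -> ccont (fun x => u x ^+ n).
Proof.
move=> uc; elim: n => [|n IH].
  have -> : (fun x => u x ^+ 0) = (fun _ => 1) by apply/funext => x; rewrite expr0.
  exact: ccont_cst.
have -> : (fun x => u x ^+ n.+1) = (fun x => u x * u x ^+ n).
  by apply/funext => x; rewrite exprS.
exact: ccont_mul.
Qed.

Lemma ccont_sum n (u : 'I_n -> T -> R[i]) : (forall j, ccont (u j)) ->
  ccont (fun x => \sum_(j < n) u j x).
Proof.
elim: n u => [|n IH] u uc.
  have -> : (fun x => \sum_(j < 0) u j x) = (fun _ => 0).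
    by apply/funext => x; rewrite big_ord0.
  exact: ccont_cst.
have -> : (fun x => \sum_(j < n.+1) u j x) =
   (fun x => \sum_(j < n) u (widen_ord (leqnSn n) j) x + u ord_max x).
  by apply/funext => x; rewrite big_ord_recr.
apply: ccont_add => //; exact: (IH (fun j => u (widen_ord (leqnSn n) j))).
Qed.

Lemma continuous_row n (f : 'I_n -> T -> R) : (forall i, continuous (f i)) ->
  continuous (fun x => \row_i f i x).
Proof.
move=> fc x; apply/cvg_mx_entourageP => A entA.
have H : forall (i : 'I_1) (j : 'I_n), \forall y \near x, A (f j x, f j y).
  move=> i j; have /cvg_entourageP /(_ A entA) := fc j x. done.
have h1 := @filter_forall _ 'I_n (fun j y => A (f j x, f j y)) (nbhs x) (nbhs_filter x) (H ord0).
have h2 : \forall y \near x, forall i j,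
    ((\row_k f k x) i j, (\row_k f k y) i j) \in A.
  by apply: (filterS _ h1) => y Hy i j; rewrite !mxE inE; exact: Hy j.
exact: h2.
Qed.
End CC.
Arguments ccont {R T}.
Arguments ccont_cst {R T}.
Arguments ccont_real {R T}.
Arguments ccont_add {R T}.
Arguments ccont_mul {R T}.
Arguments ccont_exp {R T}.
Arguments ccont_sum {R T}.
Arguments continuous_row {R T}.
Section Omega.
Context (R : realType) (p : nat) (pp : prime p).

Definition theta : R := 2 * pi / p%:R.
Definition omega : R[i] := (cos theta +i* sin theta)%C.

Lemma p_gt0 : (0 < p)%N. Proof. exact: prime_gt0. Qed.
Lemma pR_neq0 : p%:R != 0 :> R.
Proof. by rewrite pnatr_eq0 -lt0n p_gt0. Qed.

Lemma cmulE (a b c d : R) :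
  ((a +i* b) * (c +i* d))%C = ((a * c - b * d) +i* (a * d + b * c))%C :> R[i].
Proof. by []. Qed.

Lemma demoivre t n : (cos t +i* sin t)%C ^+ n = (cos (n%:R * t) +i* sin (n%:R * t))%C :> R[i].
Proof.
elim: n => [|n IH]; first by rewrite expr0 mul0r cos0 sin0.
rewrite exprS IH cmulE -[n.+1]addn1 natrD mulrDl mul1r [_ + t]addrC cosD sinD.
congr (_ +i* _)%C; lra.
Qed.

Lemma omega_p : omega ^+ p = 1.
Proof.
rewrite /omega demoivre /theta mulrCA divff ?pR_neq0 // mulr1.
have -> : (2 * pi = pi *+ 2 :> R) by rewrite mulr2n; lra.
by rewrite cos2pi sin2pi.
Qed.

Lemma omega_neq1 : omega != 1.
Proof.
have p2 : (2 <= p)%N by apply: prime_gt1.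
rewrite /omega; apply/negP => /eqP [] c1 s1.
case: (ltngtP p 2) => [|pg|pe]; first by rewrite ltnNge p2.
  have : 0 < sin theta; last by rewrite s1 ltxx.
  apply: sin_gt0_pi; apply/andP; split.
    by rewrite /theta divr_gt0 // ?mulr_gt0 ?pi_gt0 // ltr0n p_gt0.
  rewrite /theta ltr_pdivrMr ?ltr0n ?p_gt0 // mulrC ltr_pM2l ?pi_gt0 //.
  by rewrite ltr_nat.
move: c1; rewrite /theta pe mulrAC divff ?pnatr_eq0 // mul1r cospi => h.
have : (-1 : R) < 1 by lra.
by rewrite h ltxx.
Qed.

Lemma omega_expn_mod n : omega ^+ n = omega ^+ (n %% p).
Proof. by rewrite {1}(divn_eq n p) exprD mulnC exprM omega_p expr1n mul1r. Qed.

Lemma omega_exp1 n : omega ^+ n = 1 -> (p %| n)%N.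
Proof.
move=> wn; apply/negPn/negP => npn.
have cp : coprime p n by rewrite prime_coprime.
have [a _] := Bezoutl n p_gt0; rewrite (eqP cp) => /dvdnP [q hq].
have : omega ^+ (1 + a * n) = 1 by rewrite hq mulnC exprM omega_p expr1n.
rewrite exprD expr1 mulnC exprM wn expr1n mulr1 => /eqP.
by rewrite (negbTE omega_neq1).
Qed.

Lemma sum_geom n : \sum_(k < p) (omega ^+ n) ^+ k = if (p %| n)%N then p%:R else 0.
Proof.
case: ifP => [/dvdnP [q ->]|npn].
  rewrite mulnC exprM omega_p expr1n.
  under eq_bigr do rewrite expr1n.
  by rewrite sumr_const card_ord.
have : (omega ^+ n) ^+ p - 1 = 0 by rewrite -exprM mulnC exprM omega_p expr1n subrr.
rewrite subrX1 => /eqP; rewrite mulf_eq0 => /orP [|/eqP //].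
by rewrite subr_eq0 => /eqP /omega_exp1; rewrite npn.
Qed.

Lemma dvd_shift (j l : 'I_p) : (p %| (p.-1 * j + l))%N = (j == l).
Proof.
apply/idP/eqP => [h|->].
  have e1 : (p.-1 * j + l + j = p * j + l)%N.
    by rewrite -addnA [(l + j)%N]addnC addnA -mulSnr prednK ?p_gt0.
  have := congr1 (modn^~ p) e1.
  rewrite -modnDml (eqP h) add0n mulnC modnMDl !modn_small //; exact: val_inj.
rewrite (_ : p.-1 * l + l = p * l)%N; first exact: dvdn_mulr.
by rewrite -{2}[nat_of_ord l]mul1n -mulnDl addn1 prednK // p_gt0.
Qed.

Lemma dft_const (x : 'I_p -> R[i]) :
  (forall kk, (0 < kk < p)%N ->
     \sum_(j < p) x j * (omega ^+ (p.-1 * kk)) ^+ j = 0) ->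
  forall l1 l2 : 'I_p, x l1 = x l2.
Proof.
move=> H.
pose c kk := \sum_(j < p) x j * (omega ^+ (p.-1 * kk)) ^+ j.
have key : forall l : 'I_p, \sum_(kk < p) c kk * omega ^+ (l * kk) = p%:R * x l.
  move=> l; rewrite /c.
  under eq_bigr do rewrite mulr_suml.
  rewrite exchange_big /=.
  transitivity (\sum_(j < p) x j * \sum_(kk < p) (omega ^+ (p.-1 * j + l)) ^+ kk).
    apply: eq_bigr => j _; rewrite mulr_sumr; apply: eq_bigr => kk _.
    rewrite -mulrA; congr (_ * _); rewrite -!exprM -exprD.
    by congr (omega ^+ _); rewrite mulnDl mulnAC.
  under eq_bigr do rewrite sum_geom dvd_shift.
  rewrite (bigD1 l) // eqxx big1 /=; first by rewrite addr0 mulrC.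
  by move=> j /negbTE ->; rewrite mulr0.
have key2 : forall l : 'I_p, p%:R * x l = c 0%N.
  move=> l; rewrite -key (bigD1 (Ordinal p_gt0)) //= big1 /=.
    by rewrite addr0 muln0 expr0 mulr1.
  move=> kk kk0; rewrite /c H ?mul0r // ltn_ord andbT lt0n.
  by apply: contra kk0 => /eqP kk0; apply/eqP/val_inj.
move=> l1 l2; apply: (mulfI (_ : p%:R != 0 :> R[i])).
  by rewrite pnatr_eq0 -lt0n p_gt0.
by rewrite !key2.
Qed.
End Omega.

Section Main.
Context (R : realType) (E : normedModType R) (p : nat) (pp : prime p)
  (sigma : {linear E -> E})
  (Hn : forall U : E, `|sigma U| = `|U|)
  (Hp : forall U : E, iter p sigma U = U).

Lemma sigma_cont : continuous sigma.
Proof.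
move=> x; apply/cvgrPdist_lt => e e0; near=> y.
rewrite -linearB Hn; near: y; exact: cvgr_dist_lt.
Unshelve. all: by end_near. Qed.

Lemma iter_cont j : continuous (iter j sigma).
Proof.
elim: j => [|j IH] x /=; first exact: cvg_id.
apply: (continuous_comp (IH x)); exact: sigma_cont.
Qed.

Lemma iter_mulp q U : iter (q * p) sigma U = U.
Proof. by elim: q => [//|q IH]; rewrite mulSn iterD IH Hp. Qed.

Lemma iter_mod n U : iter n sigma U = iter (n %% p) sigma U.
Proof. by rewrite {1}(divn_eq n p) iterD iter_mulp. Qed.

Lemma shift_sum (g : nat -> R[i]) (w : R[i]) : w ^+ p = 1 -> g p = g 0%N ->
  w * \sum_(j < p) g j.+1 * w ^+ j = \sum_(j < p) g j * w ^+ j.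
Proof.
have [q pq] : exists q, p = q.+1 by exists p.-1; rewrite prednK // p_gt0.
rewrite pq => wp gp.
rewrite mulr_sumr big_ord_recr big_ord_recl /=.
rewrite [w * (g q.+1 * _)]mulrCA -exprS gp wp mulr1 ?expr0 ?mulr1 addrC.
congr (_ + _); apply: eq_bigr => j _.
by rewrite /bump leq0n add1n mulrCA -exprS.
Qed.
End Main.

Lemma gamma_le (R : realType) (E : normedModType R) (sigma : E -> E) p A m :
  has_index sigma p A m ->
  exists m' : nat, gamma sigma p A = Some m' /\ (m' <= m)%N.
Proof.
move=> hm; rewrite /gamma; case: pselect => [H|H]; last by exfalso; apply: H; exists m.
eexists; split; first by [].
case: ex_minnP => m' _ hmin; apply: hmin; exact/asboolP.
Qed.

Theorem mainTheorem15 (R : realType) (E : completeNormedModType R) (p : nat)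
    (sigma : {linear E -> E}) (A : set E) :
  prime p ->
  (forall U : E, `|sigma U| = `|U|) ->
  (forall U : E, iter p sigma U = U) ->
  compact A ->
  Zp_orbit sigma p A `<=` ~` Fix sigma ->
  \bigcap_(i in `I_p) (iter i sigma @` A) = set0 ->
  exists m : nat, gamma sigma p (Zp_orbit sigma p A) = Some m /\ (m <= p.-1)%N.
Proof.
move=> pp Hn Hp cA _ Hcap; apply: gamma_le.
have [->|/set0P [a0 Aa0]] := eqVneq A set0.
  exists (fun _ => 0); split.
  - by apply: continuous_subspaceT => x; apply: cvg_cst.
  - by move=> U [i _ [a []]].
  - by move=> U [i _ [a []]].
have clA : closed A by apply: compact_closed => //; exact: norm_hausdorff.
pose f (j : nat) (U : E) : R := @dA _ _ A (iter j sigma U).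
pose c (kk : nat) (U : E) : R[i] :=
  \sum_(j < p) (f j U)%:C * (omega R p ^+ (p.-1 * kk)) ^+ j.
have /choice [e He] : forall kk : nat, exists e : nat,
    (0 < kk < p)%N -> ((kk * e) %% p = 1)%N.
  move=> kk.
  have [kk0|kk0] := posnP kk.
    by exists 0%N => /andP []; rewrite kk0.
  case: (egcdnP p kk0) => km kn Heq _; exists km => /andP [_ kkp].
  have cp : coprime kk p by rewrite coprime_sym prime_coprime // gtnNdvd.
  by rewrite mulnC Heq (eqP cp) modnMDl modn_small // prime_gt1.
pose z (kk : nat) (U : E) : R[i] := (c kk U) ^+ e kk.
pose h (U : E) : cvec R p.-1 :=
  (\row_(k < p.-1) cRe (z k.+1 U), \row_(k < p.-1) cIm (z k.+1 U)).
exists h; split.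
- have fc : forall j, continuous (f j).
    move=> j x; exact: (@continuous_comp _ _ _ (iter j sigma) (@dA _ _ A) x
      (@iter_cont _ _ sigma Hn j x) (@dA_continuous _ _ A a0 Aa0 _)).
  have zc : forall kk, ccont (z kk).
    move=> kk; apply: ccont_exp; apply: ccont_sum => j.
    by apply: ccont_mul; [apply: ccont_real | apply: ccont_cst].
  have c1 : continuous (fun U => \row_(k < p.-1) cRe (z k.+1 U)).
    by apply: continuous_row => k; exact: (zc k.+1).1.
  have c2 : continuous (fun U => \row_(k < p.-1) cIm (z k.+1 U)).
    by apply: continuous_row => k; exact: (zc k.+1).2.
  apply: continuous_subspaceT => x; exact: (cvg_pair (c1 x) (c2 x)).
- move=> U [i ip [a Aa aU]]; apply/eqP => h0.
  have ip' : (i < p)%N by [].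
  have zk0 : forall kk, (0 < kk < p)%N ->
      \sum_(j < p) (f j U)%:C * (omega R p ^+ (p.-1 * kk)) ^+ j = 0.
    move=> [//|n] /andP [_ np].
    have kp : (n < p.-1)%N by rewrite -ltnS prednK ?prime_gt0.
    have hre := congr1 (fun q : cvec R p.-1 => q.1 ord0 (Ordinal kp)) h0.
    have him := congr1 (fun q : cvec R p.-1 => q.2 ord0 (Ordinal kp)) h0.
    rewrite /= !mxE in hre him.
    have : z n.+1 U = 0 by move: hre him; case: (z n.+1 U) => x y /= -> ->.
    move/eqP; rewrite expf_eq0 => /andP [_ /eqP]; exact.
  have hconst := @dft_const _ _ pp (fun j : 'I_p => (f j U)%:C) zk0.
  pose j0 := Ordinal (ltn_pmod (p - i) (prime_gt0 pp)).
  have fj0 : f j0 U = 0.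
    rewrite /f /= -aU -iterD (@iter_mod _ _ p sigma Hp) modnDml subnK ?modnn //.
    exact: (@dA0 _ _ A _ Aa).
    exact: ltnW.
  have fall : forall j : 'I_p, A (iter j sigma U).
    move=> j; apply: (@dA_eq0 _ _ A a0 Aa0) => //.
    have := congr1 (@complex.Re R) (hconst j j0); rewrite /= fj0; exact.
  have : (\bigcap_(i in `I_p) [set iter i sigma x | x in A]) U.
    move=> i' ip2; have ip3 : (i' < p)%N by [].
    exists (iter ((p - i') %% p) sigma U).
      exact: (fall (Ordinal (ltn_pmod (p - i') (prime_gt0 pp)))).
    rewrite -iterD (@iter_mod _ _ p sigma Hp) modnDmr subnKC ?modnn //.
    exact: ltnW.
  by rewrite Hcap.
- move=> U _.
  have zeq : forall kk, (0 < kk < p)%N -> z kk (sigma U) = omega R p * z kk U.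
    move=> kk kkp; pose w := omega R p ^+ (p.-1 * kk).
    have wp : w ^+ p = 1 by rewrite /w -exprM mulnC exprM omega_p // expr1n.
    have sh := @shift_sum _ _ pp (fun j => (f j U)%:C) _ wp.
    have ceq : c kk U = w * c kk (sigma U).
      rewrite /c -sh /=; last by rewrite /f Hp.
      congr (_ * _); apply: eq_bigr => j _; by rewrite /f iterSr.
    have ceq2 : c kk (sigma U) = omega R p ^+ kk * c kk U.
      rewrite ceq mulrA (_ : omega R p ^+ kk * w = 1) ?mul1r //.
      rewrite /w -exprD -mulSn prednK ?prime_gt0 // exprM omega_p //.
      by rewrite expr1n.
    by rewrite /z ceq2 exprMn -exprM omega_expn_mod // He // expr1.
  rewrite /h /crot /=; congr (_, _); apply/rowP => k;
    have kp : (0 < k.+1 < p)%N by move: (ltn_ord k); move: (nat_of_ord k) => n; case: (p).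
    all: rewrite !mxE zeq // ?ReM ?ImM /omega /theta /=.
    by [].
  by rewrite addrC.
Qed.
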